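(* Let $n\ge1$ and let $S\subseteq\mathbb{Z}_{2^n}$ with $|S|=2^{n-1}+1$. For every integer $a$ with $1\le a\le n$, $$|C(a+,a,a)|\ge\max\{|S_a|(|S_{a+}|-|L_a|+|S_a|),\;|S_{a+}|(2|S_a|-|L_a|),\;0\}.$$
   Context: Layers: for $1\le i\le n$, $L_i=\{x\in\mathbb{Z}_{2^n}: x\equiv 2^{i-1}\pmod{2^i}\}$, $L_{n+1}=\{0\}$. $S_i=S\cap L_i$ and $S_{i+}=S\cap(L_{i+1}\cup\dots\cup L_{n+1})$. $C(a+,a,a)$ is the set of ordered triples $(x,y,z)$ with $x+y=z$ in $\mathbb{Z}_{2^n}$, $x\in S_{a+}$, $y\in S_a$, $z\in S_a$. *)

(* Defs.v *)
(* Z_{2^n} is modelled as 'Z_(2^n) (faithful since n >= 1,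
   so 2^n >= 2). *)
From mathcomp Require Import all_boot all_order all_algebra.
Set Implicit Arguments. Unset Strict Implicit. Unset Printing Implicit Defensive.
Import Order.TTheory GRing.Theory Num.Theory.

(* Layer L_i of Z_{2^n}: for 1 <= i <= n, x = 2^(i-1) (mod 2^i);
   L_{n+1} = {0}. (Only used for 1 <= i <= n+1.) *)
Definition layer (n i : nat) : {set 'Z_(2^n)} :=
  if i == n.+1 then [set 0%R]
  else [set x : 'Z_(2^n) | (val x %% 2 ^ i == 2 ^ i.-1)%N].

Definition Slayer (n : nat) (S : {set 'Z_(2^n)}) (i : nat) : {set 'Z_(2^n)} :=
  S :&: layer n i.

Definition Supper (n : nat) (S : {set 'Z_(2^n)}) (i : nat) : {set 'Z_(2^n)} :=
  S :&: \bigcup_(i.+1 <= j < n.+2) layer n j.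

Definition Caaa (n : nat) (S : {set 'Z_(2^n)}) (a : nat)
  : {set 'Z_(2^n) * 'Z_(2^n) * 'Z_(2^n)} :=
  [set t | [&& (t.1.1 + t.1.2 == t.2)%R, t.1.1 \in Supper S a,
              t.1.2 \in Slayer S a & t.2 \in Slayer S a]].

(* Main.v *)
Require Import Defs.
From mathcomp Require Import all_boot all_order all_algebra.
From mathcomp Require Import zify.
Import Order.TTheory GRing.Theory Num.Theory.
Set Implicit Arguments. Unset Strict Implicit.

Lemma upper_dvd n a (x : 'Z_(2^n)) : (1 <= a)%N -> (a <= n)%N ->
  x \in \bigcup_(a.+1 <= j < n.+2) layer n j -> (2 ^ a %| val x)%N.
Proof.
move=> ha1 ha2; rewrite big_nat_cond.
pose K := fun X : {set 'Z_(2^n)} => forall x, x \in X -> (2 ^ a %| val x)%N.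
suff: K (\bigcup_(a.+1 <= j < n.+2 | (a.+1 <= j < n.+2)%N && true) layer n j) by apply.
apply: big_ind => [z|X Y hX hY z|j /andP[/andP[hj1 hj2] _] z].
- by rewrite in_set0.
- by rewrite in_setU => /orP[/hX|/hY].
- rewrite /layer; case: eqP => [_|hjn]; first by rewrite in_set1 => /eqP ->.
  rewrite inE => /eqP hz.
  have hjn' : (j <= n)%N by move/eqP: hjn; lia.
  have hdm : (2 ^ a %| 2 ^ j)%N by apply: dvdn_exp2l; lia.
  rewrite /dvdn -(modn_dvdm _ hdm) hz -/(dvdn _ _).
  by apply: dvdn_exp2l; lia.
Qed.

Lemma layer_add n a (x y : 'Z_(2^n)) : (1 <= a)%N -> (a <= n)%N ->
  x \in \bigcup_(a.+1 <= j < n.+2) layer n j -> y \in layer n a -> (x + y)%R \in layer n a.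
Proof.
move=> ha1 ha2 hx; have := upper_dvd ha1 ha2 hx => hd.
rewrite /layer; have -> : (a == n.+1) = false by apply/eqP; lia.
rewrite !inE => /eqP hy; apply/eqP.
have h2 : (1 < 2 ^ n)%N by rewrite -{1}(expn0 2) ltn_exp2l //; lia.
have key : forall m vx vy, m = 2 ^ n -> (2 ^ a %| vx)%N -> vy %% 2 ^ a = 2 ^ a.-1 ->
  ((vx + vy) %% m) %% 2 ^ a = 2 ^ a.-1.
  move=> m vx vy -> hdx hdy.
  rewrite modn_dvdm; last by apply: dvdn_exp2l.
  by rewrite -modnDml (eqP hdx) add0n.
by apply: key (Zp_cast h2) hd hy.
Qed.

Lemma count_lb (T : finType) (f : T -> T) (finj : injective f) (A B L : {set T}) :
  B \subset L -> {in A, forall x, f x \in L} ->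
  (#|A| + #|B| <= #|[set x in A | f x \in B]| + #|L|)%N.
Proof.
move=> hBL hAL.
have e1 : [set x in A | f x \in B] = A :&: f @^-1: B by apply/setP => x; rewrite !inE.
have := cardsID (f @^-1: B) A; rewrite -e1 => <-.
have := cardsID B L; rewrite (setIidPr hBL) => <-.
suff : (#|A :\: f @^-1: B| <= #|L :\: B|)%N by lia.
rewrite -(card_imset _ finj); apply: subset_leq_card.
apply/subsetP => _ /imsetP[x hx ->]; move: hx; rewrite !inE => /andP[hx1 hx2].
by rewrite hx1 hAL.
Qed.

Lemma card_C n (S : {set 'Z_(2^n)}) a :
  #|Caaa S a| = (\sum_(x in Supper S a) #|[set y in Slayer S a | (x + y)%R \in Slayer S a]|)%N.
Proof.
pose D := [set p : 'Z_(2^n) * 'Z_(2^n) | [&& p.1 \in Supper S a, p.2 \in Slayer S a & (p.1 + p.2)%R \in Slayer S a]].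
have -> : Caaa S a = [set (p, (p.1 + p.2)%R) | p in D].
  apply/setP => t; apply/idP/imsetP.
  - case: t => [[x y] z]; rewrite inE /= => /and4P[/eqP <- h1 h2 h3].
    by exists (x, y) => //; rewrite inE /= h1 h2 h3.
  - by case=> [[x y]]; rewrite inE /= => /and3P[h1 h2 h3] ->; rewrite inE /= eqxx h1 h2 h3.
rewrite card_imset; last by move=> p q [].
rewrite -sum1_card.
rewrite (eq_bigl (fun p => (p.1 \in Supper S a) && ((p.2 \in Slayer S a) && ((p.1 + p.2)%R \in Slayer S a)))); last by move=> p; rewrite inE.
rewrite -(pair_big_dep (fun x => x \in Supper S a) (fun x y => (y \in Slayer S a) && ((x + y)%R \in Slayer S a)) (fun _ _ => 1%N)).
apply: eq_bigr => x _; rewrite -sum1_card; apply: eq_bigl => y; by rewrite inE.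
Qed.

Lemma int_aux1 (p q r s : nat) : (p + q <= r + s)%N -> (p%:Z - s%:Z + q%:Z <= r%:Z)%R.
Proof. lia. Qed.
Lemma int_aux2 (q r s : nat) : (q + q <= r + s)%N -> (2 * q%:Z - s%:Z <= r%:Z)%R.
Proof. lia. Qed.

Theorem claim4p3 (n : nat) (hn : (1 <= n)%N) (S : {set 'Z_(2^n)})
  (hS : #|S| = (2 ^ n.-1).+1) (a : nat) (ha1 : (1 <= a)%N) (ha2 : (a <= n)%N) :
  (Num.max (Num.max
     (#|Slayer S a|%:Z * (#|Supper S a|%:Z - #|layer n a|%:Z + #|Slayer S a|%:Z))
     (#|Supper S a|%:Z * (2 * #|Slayer S a|%:Z - #|layer n a|%:Z)))
     0
   <= #|Caaa S a|%:Z)%R.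
Proof.
have hSlL : Slayer S a \subset layer n a by apply: subsetIr.
have hup : forall x, x \in Supper S a -> x \in \bigcup_(a.+1 <= j < n.+2) layer n j.
  by move=> x; rewrite inE => /andP[].
have hlay : forall y, y \in Slayer S a -> y \in layer n a.
  by move=> y; rewrite inE => /andP[].
rewrite card_C !ge_max; apply/andP; split; last by [].
apply/andP; split.
- have -> : (\sum_(x in Supper S a) #|[set y in Slayer S a | (x + y)%R \in Slayer S a]| =
             \sum_(y in Slayer S a) #|[set x in Supper S a | (x + y)%R \in Slayer S a]|)%N.
    under eq_bigr => x _ do rewrite -sum1_card.
    rewrite (exchange_big_dep (fun y => y \in Slayer S a)) /=; last first.
      by move=> x y _; rewrite inE => /andP[].
    apply: eq_bigr => y hy; rewrite -sum1_card; apply: eq_bigl => x.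
    move: hy; rewrite !inE => /andP[-> ->]; by rewrite ?andbT.
  rewrite -[Posz (\sum_(_ in _) _)]natz natr_sum.
  have : (\sum_(y in Slayer S a) ((#|Supper S a|%:Z - #|layer n a|%:Z + #|Slayer S a|%:Z)) <=
          \sum_(y in Slayer S a) (#|[set x in Supper S a | (x + y)%R \in Slayer S a]|%:R : int))%R.
    apply: ler_sum => y hy.
    have := count_lb (addIr y) hSlL (fun x hx => layer_add ha1 ha2 (hup x hx) (hlay y hy)).
    by rewrite natz => h; apply: int_aux1 h.
  by move=> H; apply: le_trans H; rewrite sumr_const -[(_ *+ #|_|)%R]mulr_natl natz.
- rewrite -[Posz (\sum_(_ in _) _)]natz natr_sum.
  have : (\sum_(x in Supper S a) ((2 * #|Slayer S a|%:Z - #|layer n a|%:Z)) <=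
          \sum_(x in Supper S a) (#|[set y in Slayer S a | (x + y)%R \in Slayer S a]|%:R : int))%R.
    apply: ler_sum => x hx.
    have := count_lb (addrI x) hSlL (fun y hy => layer_add ha1 ha2 (hup x hx) (hlay y hy)).
    by move=> h; rewrite [X in (_ <= X)%R]natz; apply: int_aux2 h.
  by move=> H; apply: le_trans H; rewrite sumr_const -[(_ *+ #|_|)%R]mulr_natl [X in (_ <= X * _)%R]natz.
Qed.
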